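(* Let $\mathcal{X}\subseteq\mathbb{R}^d$ be nonempty, closed and convex, and let $f:\mathbb{R}^d\to\mathbb{R}$ be differentiable (not necessarily convex) and $L$-smooth on an open set containing $\mathcal{X}$; assume the constrained minimum $f_\star=\min_{x\in\mathcal{X}}f(x)$ is attained. For $\gamma>0$ define $G_\gamma(x):=\frac1\gamma\big(x-\Pi_{\mathcal{X}}(x-\gamma\nabla f(x))\big)$, where $\Pi_{\mathcal{X}}$ is the Euclidean projection onto $\mathcal{X}$. Suppose there are $\mu>0$ and $\gamma\in(0,1/L]$ such that $\frac12\|G_\gamma(x)\|^2\ge\mu(f(x)-f_\star)$ for all $x\in\mathcal{X}$. Let $x_0\in\mathcal{X}$ and $x_{k+1}\in\operatorname{arg\,min}_{z\in\mathcal{X}\cap\mathcal{B}(x_k,t_k)}\langle\nabla f(x_k),z\rangle$ with $t_k:=\gamma\|G_\gamma(x_k)\|$. Then for every $k\ge0$, $f(x_{k+1})\le f(x_k)-\frac\gamma2\|G_\gamma(x_k)\|^2$, and consequently $f(x_k)-f_\star\le(1-\gamma\mu)^k(f(x_0)-f_\star)$ for all $k\ge0$. In particular, for $\gamma=1/L$, $f(x_k)-f_\star\le(1-\mu/L)^k(f(x_0)-f_\star)$.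
   Context: $\|\cdot\|$ is the Euclidean norm, $\mathcal{B}(x,t):=\{y:\|y-x\|\le t\}$; $L$-smooth means $\nabla f$ is $L$-Lipschitz. *)

(* Defs.v *)
From HB Require Import structures.
From mathcomp Require Import all_boot all_order all_algebra.
From mathcomp Require Import all_classical all_reals all_analysis.
Set Implicit Arguments. Unset Strict Implicit. Unset Printing Implicit Defensive.
Import Order.TTheory GRing.Theory Num.Theory.
Import numFieldNormedType.Exports.
Local Open Scope classical_set_scope.
Local Open Scope ring_scope.

Section Defs.
Variables (R : realType) (d : nat).
Local Notation V := 'rV[R]_d.

Definition dotp (u v : V) : R := \sum_(i < d) u ord0 i * v ord0 i.
Definition enorm (u : V) : R := Num.sqrt (dotp u u).

Definition eball (x : V) (t : R) : set V := [set y | enorm (y - x) <= t].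

Definition convex_set_ (X : set V) : Prop :=
  forall x y, X x -> X y -> forall t : R, 0 <= t -> t <= 1 ->
    X ((1 - t) *: x + t *: y).

Definition is_proj (X : set V) (y p : V) : Prop :=
  X p /\ forall z, X z -> enorm (y - p) <= enorm (y - z).

(* Euclidean projection Pi_X (well defined, i.e. the unique is_proj point,
   when X is nonempty closed convex) *)
Definition proj (X : set V) (y : V) : V := xget 0 [set p | is_proj X y p].

Definition grad_map (X : set V) (gradf : V -> V) (gamma : R) (x : V) : V :=
  gamma^-1 *: (x - proj X (x - gamma *: gradf x)).

Definition is_argmin (S : set V) (phi : V -> R) (z : V) : Prop :=
  S z /\ forall w, S w -> phi z <= phi w.

End Defs.

(* Main.v *)
Require Import Defs.
From HB Require Import structures.
From mathcomp Require Import all_boot all_order all_algebra.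
From mathcomp Require Import all_classical all_reals all_analysis.
From mathcomp Require Import ring lra.
Import Order.TTheory GRing.Theory Num.Theory.
Import numFieldNormedType.Exports.
Local Open Scope classical_set_scope.
Local Open Scope ring_scope.
Set Implicit Arguments. Unset Strict Implicit.

Section Dot.
Variables (R : realType) (d : nat).
Implicit Types (u v w : 'rV[R]_d) (a : R).

Lemma dotpC u v : dotp u v = dotp v u.
Proof. by rewrite /dotp; apply: eq_bigr => i _; rewrite mulrC. Qed.
Lemma dotpDl u w v : dotp (u + w) v = dotp u v + dotp w v.
Proof. by rewrite /dotp -big_split; apply: eq_bigr => i _; rewrite mxE mulrDl. Qed.
Lemma dotpZl a u v : dotp (a *: u) v = a * dotp u v.
Proof. by rewrite /dotp mulr_sumr; apply: eq_bigr => i _; rewrite mxE mulrA. Qed.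
Lemma dotpNl u v : dotp (- u) v = - dotp u v.
Proof. by rewrite -scaleN1r dotpZl mulN1r. Qed.
Lemma dotpBl u w v : dotp (u - w) v = dotp u v - dotp w v.
Proof. by rewrite dotpDl dotpNl. Qed.
Lemma dotpDr u v w : dotp u (v + w) = dotp u v + dotp u w.
Proof. by rewrite dotpC dotpDl !(dotpC u). Qed.
Lemma dotpZr a u v : dotp u (a *: v) = a * dotp u v.
Proof. by rewrite dotpC dotpZl dotpC. Qed.
Lemma dotpNr u v : dotp u (- v) = - dotp u v.
Proof. by rewrite dotpC dotpNl dotpC. Qed.
Lemma dotpBr u v w : dotp u (v - w) = dotp u v - dotp u w.
Proof. by rewrite dotpDr dotpNr. Qed.
Lemma dotpp_ge0 u : 0 <= dotp u u.
Proof. by rewrite /dotp; apply: sumr_ge0 => i _; rewrite -expr2 sqr_ge0. Qed.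
Lemma enorm_ge0 u : 0 <= enorm u.
Proof. exact: sqrtr_ge0. Qed.
Lemma enorm_sqr u : enorm u ^+ 2 = dotp u u.
Proof. by rewrite /enorm sqr_sqrtr // dotpp_ge0. Qed.
Lemma dotpp0 u v : dotp u u = 0 -> dotp u v = 0.
Proof.
move=> h; rewrite /dotp big1 // => i _.
have := @psumr_eq0P R _ xpredT (fun i => u ord0 i * u ord0 i).
move=> /(_ (fun j _ => ltac:(by rewrite -expr2 sqr_ge0))) /(_ h i isT).
by move/eqP; rewrite mulf_eq0 orbb => /eqP ->; rewrite mul0r.
Qed.
Lemma CS u v : dotp u v <= enorm u * enorm v.
Proof.
set a := enorm u; set b := enorm v.
have a0 : 0 <= a by exact: enorm_ge0.
have b0 : 0 <= b by exact: enorm_ge0.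
have [a00|ap] := eqVneq a 0.
  have : dotp u u = 0 by rewrite -enorm_sqr -/a a00 expr0n.
  by move/dotpp0 => ->; rewrite a00 mul0r.
have [b00|bp] := eqVneq b 0.
  have : dotp v v = 0 by rewrite -enorm_sqr -/b b00 expr0n.
  by move/dotpp0; rewrite dotpC => ->; rewrite b00 mulr0.
have h := dotpp_ge0 (b *: u - a *: v).
rewrite !(dotpBl, dotpBr, dotpZl, dotpZr) -!enorm_sqr -/a -/b (dotpC v u) in h.
have abp : 0 < a * b by rewrite mulr_gt0 // lt0r ?ap ?bp.
have : 0 <= a * b * (2 * (a * b - dotp u v)).
  by move: h; congr (_ <= _); ring.
rewrite pmulr_rge0 //; lra.
Qed.
Lemma enormZ a u : enorm (a *: u) = `|a| * enorm u.
Proof. by rewrite /enorm dotpZl dotpZr mulrA -expr2 sqrtrM ?sqr_ge0 // sqrtr_sqr. Qed.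
Lemma enormB u v : enorm (u - v) = enorm (v - u).
Proof. by rewrite -opprB -scaleN1r enormZ normrN normr1 mul1r. Qed.
End Dot.
Section Proj.
Variables (R : realType) (d : nat).
Local Notation V := 'rV[R]_d.

Lemma cont_sum (F : 'I_d -> V -> R) (s : seq 'I_d) :
  (forall i, continuous (F i)) -> continuous (fun z => \sum_(i <- s) F i z).
Proof.
move=> Fc; elim: s => [|i s IH].
  by under eq_fun do rewrite big_nil; exact: cst_continuous.
under eq_fun do rewrite big_cons.
by move=> z; apply: continuousD; [exact: Fc|exact: IH].
Qed.

Lemma q_cont (y : V) : continuous (fun z : V => dotp (y - z) (y - z)).
Proof.
rewrite /dotp; apply: cont_sum => i z.
have h : {for z, continuous (fun z : V => (y - z) ord0 i)}.
  rewrite (_ : (fun z : V => (y - z) ord0 i) = (fun z : V => y ord0 i - z ord0 i)).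
    2: by apply/funext => w; rewrite !mxE.
  apply: continuousB; first exact: cst_continuous.
  exact: coord_continuous.
exact: continuousM.
Qed.

Lemma proj_exists (X : set V) y : X !=set0 -> closed X -> exists p, is_proj X y p.
Proof.
move=> [x0 Xx0] Xcl.
pose q z := dotp (y - z) (y - z).
pose r := q x0.
pose A := X `&` [set z | q z <= r].
have Acl : closed A.
  apply: closedI => //.
  apply: (@preimage_closed _ _ q [set t : R | t <= r]); last exact: closed_le.
  by move=> z _; exact: q_cont.
have nE (w : V) : `|w| = \big[Num.max/0]_ij `|w ij.1 ij.2| by rewrite -mx_normrE.
have Abd : bounded_set A.
  suff : \forall M \near +oo, forall z, A z -> `|z| <= M by [].
  near=> M => z [_ /= qz].
  rewrite nE; apply: bigmax_le => [|[i j] _] /=.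
    by near: M; apply: nbhs_pinfty_ge; rewrite num_real.
  have -> : i = ord0 by apply/val_inj; case: i => -[].
  have h1 : `|y ord0 j| <= `|y| by rewrite nE (le_bigmax _ _ (ord0, j)).
  have h2 : (y ord0 j - z ord0 j) ^+ 2 <= r.
    apply: le_trans qz; rewrite /q /dotp (bigD1 j) //= !mxE -expr2 lerDl.
    by apply: sumr_ge0 => k _; rewrite -expr2 sqr_ge0.
  have h3 : `|y ord0 j - z ord0 j| <= 1 + r.
    apply: le_trans (_ : 1 + (y ord0 j - z ord0 j) ^+ 2 <= _); last by rewrite lerD2l.
    rewrite -real_normK ?num_real //.
    set t := `|_|; have : 0 <= t by rewrite normr_ge0.
    move=> t0; rewrite -subr_ge0.
    have -> : 1 + t ^+ 2 - t = (t - 2^-1) ^+ 2 + 3/4 by field.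
    by apply: addr_ge0; [rewrite sqr_ge0|].
  have h4 : `|z ord0 j| <= `|y| + (1 + r).
    have -> : z ord0 j = y ord0 j - (y ord0 j - z ord0 j) by rewrite subKr.
    by apply: le_trans (ler_normB _ _) _; apply: lerD.
  apply: le_trans h4 _.
  by near: M; apply: nbhs_pinfty_ge; rewrite num_real.
have Acp : compact A by exact: bounded_closed_compact.
have A0 : A !=set0 by exists x0; split => //=; rewrite /r lexx.
have qc : {within A, continuous q}.
  by apply: continuous_subspaceT => z; exact: q_cont.
have [p pA pmin] := EVT_min_rV A0 Acp qc.
rewrite inE in pA; case: pA => Xp qp.
exists p; split => // z Xz.
rewrite /enorm ler_sqrt ?dotpp_ge0 //.
have [zr|zr] := leP (q z) r.
  by apply: pmin; rewrite inE; split.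
by apply: le_trans qp (ltW zr).
Unshelve. all: end_near.
Qed.

Lemma proj_spec (X : set V) y : X !=set0 -> closed X -> is_proj X y (Defs.proj X y).
Proof. by move=> X0 Xcl; rewrite /proj; apply: xgetPex; apply: proj_exists. Qed.
End Proj.
Section VI.
Variables (R : realType) (d : nat).
Local Notation V := 'rV[R]_d.

Lemma enorm_le_sq (u v : V) : enorm u <= enorm v -> dotp u u <= dotp v v.
Proof. by rewrite /enorm ler_sqrt // dotpp_ge0. Qed.

Lemma dotp_sq (u w : V) t :
  dotp (u - t *: w) (u - t *: w) = dotp u u - 2 * t * dotp u w + t ^+ 2 * dotp w w.
Proof. rewrite !(dotpBl, dotpBr, dotpZl, dotpZr) (dotpC w u); ring. Qed.

Lemma proj_vi (X : set V) y p z : convex_set_ X -> is_proj X y p -> X z ->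
  dotp (y - p) (z - p) <= 0.
Proof.
move=> cX [Xp pmin] Xz.
set a := dotp (y - p) (z - p); set b := dotp (z - p) (z - p).
rewrite leNgt; apply/negP => a0.
have b0 : 0 <= b by exact: dotpp_ge0.
have ab0 : 0 < a + b by lra.
pose t := a / (a + b).
have t0 : 0 <= t by rewrite divr_ge0 // ltW.
have t1 : t <= 1 by rewrite ler_pdivrMr // mul1r lerDl.
have := pmin _ (cX _ _ Xp Xz t t0 t1) => /enorm_le_sq.
have -> : y - ((1 - t) *: p + t *: z) = (y - p) - t *: (z - p).
  by apply/rowP => i; rewrite !mxE; ring.
rewrite dotp_sq -/a -/b.
move=> h.
have h2 : t * (t * b - 2 * a) >= 0 by move: h; rewrite -subr_ge0; congr (_ <= _); ring.
have tp : 0 < t by rewrite divr_gt0.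
rewrite pmulr_rge0 // in h2.
have : t * b < a.
  rewrite /t mulrAC ltr_pdivrMr //; nra.
lra.
Qed.
End VI.
Section Descent.
Variables (R : realType) (d : nat).
Local Notation V := 'rV[R]_d.
Variables (f : V -> R) (gradf : V -> V).
Hypothesis fdiff : forall y, differentiable f y.
Hypothesis fgrad : forall y v, 'd f y v = dotp (gradf y) v.

Lemma phi_derive (y v : V) (t : R) :
  is_derive t 1 (fun s : R => f (y + s *: v)) (dotp (gradf (y + t *: v)) v).
Proof.
set a := y + t *: v.
have E : (fun h : R => h^-1 *: (((fun s : R => f (y + s *: v)) \o shift t) (h *: (1:R))
            - f (y + t *: v))) =
         (fun h : R => h^-1 *: ((f \o shift a) (h *: v) - f a)).
  apply/funext => h /=; congr (_ *: (f _ - _)).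
  rewrite /a (_ : h%:A = h); first by rewrite scalerDl addrCA.
  by rewrite -[h%:A]/(h * 1) mulr1.
split.
  by rewrite /derivable E; exact: diff_derivable.
by rewrite /derive E -/(derive f a v) deriveE // fgrad.
Qed.

Lemma descent (X U : set V) (L : R) (y z : V) :
  convex_set_ X -> X `<=` U -> 0 <= L ->
  (forall y z, U y -> U z -> enorm (gradf y - gradf z) <= L * enorm (y - z)) ->
  X y -> X z ->
  f z <= f y + dotp (gradf y) (z - y) + L / 2 * dotp (z - y) (z - y).
Proof.
move=> cX XU L0 Lip Xy Xz.
set v := z - y; set c1 := dotp (gradf y) v; set c2 := L / 2 * dotp v v.
pose h := fun s : R => f (y + s *: v) - (s * c1 + s ^+ 2 * c2).
pose dh := fun s : R => dotp (gradf (y + s *: v)) v - (c1 + 2 * s * c2).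
have hd (s : R) : is_derive s (1 : R) h (dh s).
  rewrite /h /dh; apply: is_deriveB; first exact: phi_derive.
  apply: is_derive_eq.
  by rewrite !scaler0 !add0r -[c1%:A]/(c1 * 1) -[s%:A]/(s * 1) !mulr1 /GRing.scale /=; ring.
have hc : {within `[0, 1], continuous h}.
  by apply: derivable_within_continuous => s _; exact: ex_derive.
have [c c01 E] := MVT ltr01 (fun s _ => hd s) hc.
have h1 : h 1 = f z - c1 - c2.
  rewrite /h scale1r /v addrCA subrr addr0 expr1n !mul1r; ring.
have h0 : h 0 = f y by rewrite /h scale0r addr0 mul0r expr0n /= mul0r !addr0 subr0.
rewrite h1 h0 subr0 mulr1 in E.
have [c0 c1'] : 0 < c /\ c < 1 by move: c01; rewrite in_itv /= => /andP.
have Xc : X (y + c *: v).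
  have -> : y + c *: v = (1 - c) *: y + c *: z.
    by apply/rowP => i; rewrite !mxE; ring.
  by apply: cX => //; lra.
have dh0 : dh c <= 0.
  rewrite /dh /c2.
  have -> : dotp (gradf (y + c *: v)) v - (c1 + 2 * c * (L / 2 * dotp v v)) =
            dotp (gradf (y + c *: v) - gradf y) v - c * L * dotp v v.
    by rewrite dotpBl /c1; field.
  rewrite subr_le0; apply: le_trans (CS _ _) _.
  apply: le_trans (ler_wpM2r (enorm_ge0 _) (Lip _ _ (XU _ Xc) (XU _ Xy))) _.
  rewrite addrC addKr enormZ (ger0_norm (ltW c0)) -enorm_sqr.
  by rewrite expr2 !mulrA (mulrC L c) -!mulrA.
lra.
Qed.
End Descent.
Unset Implicit Arguments. Set Strict Implicit.
Theorem theorem8 (R : realType) (d : nat)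
  (X : set 'rV[R]_d) (f : 'rV[R]_d -> R) (gradf : 'rV[R]_d -> 'rV[R]_d)
  (U : set 'rV[R]_d) (L mu gamma : R) (xstar : 'rV[R]_d)
  (x : nat -> 'rV[R]_d) :
  X !=set0 -> closed X -> convex_set_ X ->
  (forall y, differentiable f y) ->
  (forall y v, 'd f y v = dotp (gradf y) v) ->
  open U -> X `<=` U -> 0 < L ->
  (forall y z, U y -> U z -> enorm (gradf y - gradf z) <= L * enorm (y - z)) ->
  X xstar -> (forall y, X y -> f xstar <= f y) ->
  0 < mu -> 0 < gamma -> gamma <= L^-1 ->
  (forall y, X y ->
     2^-1 * enorm (grad_map X gradf gamma y) ^+ 2 >= mu * (f y - f xstar)) ->
  X (x 0%N) ->
  (forall k, is_argmin
       (X `&` eball (x k) (gamma * enorm (grad_map X gradf gamma (x k))))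
       (dotp (gradf (x k))) (x k.+1)) ->
  (forall k, f (x k.+1) <=
       f (x k) - gamma / 2 * enorm (grad_map X gradf gamma (x k)) ^+ 2) /\
  (forall k, f (x k) - f xstar <= (1 - gamma * mu) ^+ k * (f (x 0%N) - f xstar)) /\
  (gamma = L^-1 ->
     forall k, f (x k) - f xstar <= (1 - mu / L) ^+ k * (f (x 0%N) - f xstar)).
Proof.
move=> X0 Xcl cX fdiff fgrad _ XU L0 Lip Xs smin mu0 g0 gL PL Xx0 amin.
have Xx k : X (x k) by case: k => [//|k]; case: (amin k) => -[].
have Lg : L * gamma <= 1.
  by apply: le_trans (ler_wpM2l (ltW L0) gL) _; rewrite mulfV ?gt_eqF.
have step k : f (x k.+1) <=
       f (x k) - gamma / 2 * enorm (grad_map X gradf gamma (x k)) ^+ 2.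
  set y := x k; set g := gradf y.
  set p := Defs.proj X (y - gamma *: g).
  have pP : is_proj X (y - gamma *: g) p by exact: proj_spec.
  have Xp : X p by case: pP.
  set D := dotp (y - p) (y - p).
  set gq := dotp g (y - p).
  have D0 : 0 <= D by exact: dotpp_ge0.
  have vi := proj_vi cX pP (Xx k).
  have vi' : D <= gamma * gq.
    move: vi; rewrite (_ : y - gamma *: g - p = (y - p) - gamma *: g); last first.
      by apply/rowP => i; rewrite !mxE; ring.
    by rewrite dotpBl dotpZl -/D -/gq subr_le0.
  have Gdef : grad_map X gradf gamma y = gamma^-1 *: (y - p) by [].
  have nG : gamma * enorm (grad_map X gradf gamma y) = enorm (p - y).
    rewrite Gdef enormZ ger0_norm ?invr_ge0 ?ltW // mulrA mulfV ?gt_eqF // mul1r.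
    exact: enormB.
  have sG : enorm (grad_map X gradf gamma y) ^+ 2 = gamma^-1 * gamma^-1 * D.
    by rewrite enorm_sqr Gdef dotpZl dotpZr mulrA.
  case: (amin k) => -[Xx1 bx1] amin1.
  have := amin1 p (conj Xp (_ : eball y _ p)); rewrite /eball /= nG => /(_ (lexx _)).
  move=> lin.
  rewrite /eball /= nG in bx1.
  have Dx : dotp (x k.+1 - y) (x k.+1 - y) <= D.
    have -> : D = dotp (p - y) (p - y) by rewrite /D -opprB dotpNl dotpNr opprK.
    exact: enorm_le_sq.
  have des := descent fdiff fgrad cX XU (ltW L0) Lip (Xx k) Xx1.
  have lin' : dotp g (x k.+1 - y) <= - gq.
    rewrite dotpBr /gq dotpBr -/g; lra.
  rewrite sG.
  set ig := gamma^-1.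
  have igp : 0 < ig by rewrite invr_gt0.
  have gig : gamma * ig = 1 by rewrite mulfV ?gt_eqF.
  have Lig : L <= ig.
    by rewrite -[L]mulr1 -gig mulrA; apply: le_trans (ler_wpM2r (ltW igp) Lg) _; rewrite mul1r.
  have gqD : ig * D <= gq.
    by apply: le_trans (ler_wpM2l (ltW igp) vi') _; rewrite mulrA (mulrC ig) gig mul1r.
  have e1 : L / 2 * dotp (x k.+1 - y) (x k.+1 - y) <= ig / 2 * D.
    apply: le_trans (_ : L / 2 * D <= _).
      by apply: ler_wpM2l => //; rewrite divr_ge0 ?ltW.
    by apply: ler_wpM2r => //; rewrite ler_pM2r.
  have e2 : gamma / 2 * (ig * ig * D) = ig / 2 * D.
    by rewrite /ig; field; rewrite gt_eqF.
  rewrite e2 -/g; lra.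
have rate k : f (x k.+1) - f xstar <= (1 - gamma * mu) * (f (x k) - f xstar).
  have := PL _ (Xx k); have := step k.
  set E := enorm _ ^+ 2 => s p.
  have h : gamma * (mu * (f (x k) - f xstar)) <= gamma * (2^-1 * E).
    by rewrite ler_pM2l.
  have -> : (1 - gamma * mu) * (f (x k) - f xstar) =
    (f (x k) - f xstar) - gamma * (mu * (f (x k) - f xstar)) by ring.
  have s' : f (x k.+1) <= f (x k) - gamma * (2^-1 * E) by rewrite mulrA.
  move: s' h; set A := gamma * (2^-1 * E); set B := gamma * (mu * _) => s' h.
  lra.
have a0 k : 0 <= f (x k) - f xstar by rewrite subr_ge0; exact: smin.
have lin k : f (x k) - f xstar <= (1 - gamma * mu) ^+ k * (f (x 0%N) - f xstar).
  have [c0|c0] := leP 0 (1 - gamma * mu).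
    elim: k => [|k IH]; first by rewrite expr0 mul1r.
    apply: le_trans (rate k) _.
    by rewrite exprS -mulrA; apply: ler_wpM2l.
  have z k' : f (x k') - f xstar = 0.
    apply/eqP; rewrite eq_le a0 andbT.
    have r := rate k'; have := a0 k'.+1; have := a0 k'.
    move=> h1 h2.
    have : (1 - gamma * mu) * (f (x k') - f xstar) <= 0 by nra.
    nra.
  by rewrite !z mulr0.
split => //; split => // gLe k.
by rewrite (_ : mu / L = gamma * mu) // gLe mulrC.
Qed.
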